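(* Let $N=N_n\to\infty$ and $m=m_n\to\infty$ be sequences of positive integers, and let $\delta_n,\varepsilon_n$ be positive sequences converging to $0$ with $\varepsilon_n=o(\delta_n)$. For every $n$ there is a coupling of $M'=M'_n\overset{d}{=}M(\lfloor N(1+\varepsilon_n)\rfloor,m)$ and $M=M_n\overset{d}{=}M(N,m)$ such that $M\le M'$ almost surely and $\mathbb P(M'-\delta_n\mathbb E\,M'\le M)\to1$. If, additionally, $\mathbb P(M'>\delta_n^{-1})\to0$, then $\mathbb P(M=M')\to1$.
   Context: $M(N,m)$ is the maximum number of balls in a bin after $N$ balls are thrown independently and uniformly at random into $m$ bins. *)

(* Defs.v *)
From mathcomp Require Import all_boot.
From Stdlib Require Import Reals ZArith.

Set Implicit Arguments.
Unset Strict Implicit.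
Unset Printing Implicit Defensive.

Definition maxload (N m : nat) (f : {ffun 'I_N -> 'I_m}) : nat :=
  (\max_(j < m) #|[set i | f i == j]|)%N.

Definition count_maxload (N m k : nat) : nat :=
  #|[set f : {ffun 'I_N -> 'I_m} | maxload f == k]|.

Local Open Scope R_scope.

(* Law of M(N,m): P(M(N,m) = k), balls thrown independently and uniformly,
   i.e. the assignment is uniform over the m^N functions 'I_N -> 'I_m. *)
Definition law_M (N m k : nat) : R :=
  INR (count_maxload N m k) / INR (expn m N).

(* floor(x) for x >= 0, as a natural number *)
Definition nfloor (x : R) : nat := Z.to_nat (Int_part x).

(* p : nat -> nat -> R is the joint pmf of a pair (M', M) of nat-valued random
   variables, supported in [0..K]x[0..K], with marginal laws mu (of M') and nu (of M). *)
Definition is_coupling (K : nat) (p : nat -> nat -> R) (mu nu : nat -> R) : Prop :=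
  (forall a b, 0 <= p a b) /\
  (forall a b, (K < a)%nat \/ (K < b)%nat -> p a b = 0) /\
  (forall a, (a <= K)%nat -> sum_f_R0 (fun b => p a b) K = mu a) /\
  (forall b, (b <= K)%nat -> sum_f_R0 (fun a => p a b) K = nu b).

Definition probJ (K : nat) (p : nat -> nat -> R) (E : nat -> nat -> bool) : R :=
  sum_f_R0 (fun a => sum_f_R0 (fun b => if E a b then p a b else 0) K) K.

Definition mean_M (N m : nat) : R :=
  sum_f_R0 (fun a => INR a * law_M N m a) N.

Definition tail_M (N m : nat) (t : R) : R :=
  sum_f_R0 (fun a => if Rlt_dec t (INR a) then law_M N m a else 0) N.

Definition Rle_b (x y : R) : bool := if Rle_dec x y then true else false.

Definition tends_to_infty (u : nat -> nat) : Prop :=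
  forall B : nat, exists n0 : nat, forall n, (n0 <= n)%nat -> (B <= u n)%nat.

(* Main.v *)
Require Import Defs.
From mathcomp Require Import all_boot.
From Stdlib Require Import Reals.
From Stdlib Require Import Lra Lia ZArith.
From mathcomp Require Import zify.
Local Open Scope R_scope.

Section Helpers.
Local Set Implicit Arguments.
Local Unset Strict Implicit.
Local Open Scope nat_scope.

Section Unif.
Variables (A B C : finType) (s : A -> B).
Hypothesis sinj : injective s.

Definition resF (f : {ffun B -> C}) : {ffun A -> C} := [ffun a => f (s a)].

Lemma card_fiber (g : {ffun A -> C}) :
  #|[set f : {ffun B -> C} | resF f == g]| = expn #|C| (#|B| - #|A|).
Proof.
pose F := fun b : B => if [pick a | s a == b] is Some a then pred1 (g a) else [pred _ : C | true].
have -> : [set f : {ffun B -> C} | resF f == g] = [set f in finfun.family F].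
  apply/setP => f; rewrite !inE; apply/eqP/familyP => [Hg b | Hf].
    rewrite /F; case: pickP => [a /eqP <-|_] //=.
    by rewrite inE -Hg ffunE.
  apply/ffunP => a; rewrite ffunE; have := Hf (s a); rewrite /F.
  case: pickP => [a' /eqP /sinj -> /eqP //|/(_ a)]; by rewrite eqxx.
rewrite cardsE card_family foldrE big_map big_enum /=.
have -> : \prod_(b : B) #|F b| = \prod_(b : B) (if b \in codom s then 1 else #|C|).
  apply: eq_bigr => b _; rewrite /F; case: pickP => [a /eqP <-|Hn].
    by rewrite codom_f card1.
  have -> : (b \in codom s) = false.
    by apply/negbTE/negP => /codomP [a Ha]; have := Hn a; rewrite Ha eqxx.
  by apply: eq_card => c.
rewrite (bigID (fun b => b \in codom s)) /=.
rewrite (eq_bigr (fun _ => 1)); last by move=> b ->.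
rewrite big1_eq mul1n (eq_bigr (fun _ => #|C|)); last by move=> b /negbTE ->.
rewrite prod_nat_const.
have := cardC (mem (codom s)); rewrite card_codom //.
have -> : #|[predC codom s]| = #|[pred b | b \notin codom s]| by apply: eq_card.
by move=> <-; rewrite addKn.
Qed.

Lemma sum_resF (h : {ffun A -> C} -> nat) :
  \sum_(f : {ffun B -> C}) h (resF f) = expn #|C| (#|B| - #|A|) * \sum_(g : {ffun A -> C}) h g.
Proof.
rewrite (partition_big resF xpredT) //= big_distrr /=.
apply: eq_bigr => g _.
rewrite (eq_bigr (fun _ => h g)); last by move=> f /eqP ->.
rewrite sum_nat_cond_const card_fiber // mulnC.
Qed.
End Unif.


Definition load N m (f : {ffun 'I_N -> 'I_m}) (j : 'I_m) := #|[set i | f i == j]|.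

Lemma card_setE (T : finType) (P : pred T) : #|[set x | P x]| = \sum_x (P x : nat).
Proof. rewrite -sum1_card big_mkcond /=; apply: eq_bigr => x _; rewrite inE; by case: (P x). Qed.

Lemma load_le_max N m (f : {ffun 'I_N -> 'I_m}) j : load f j <= maxload f.
Proof. rewrite /load /maxload; exact: leq_bigmax. Qed.

Lemma maxload_le N m (f : {ffun 'I_N -> 'I_m}) : maxload f <= N.
Proof.
apply/bigmax_leqP => j _; rewrite -[X in _ <= X]card_ord; exact: max_card.
Qed.

Lemma maxload_att N m (f : {ffun 'I_N -> 'I_m}) : 0 < m -> exists j, maxload f = load f j.
Proof.
move=> Hm; have Hc : 0 < #|'I_m| by rewrite card_ord.
have [j Hj] := @eq_bigmax 'I_m (fun j => #|[set i | f i == j]|) Hc.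
by exists j.
Qed.

Lemma maxload_res N K m (s : 'I_N -> 'I_K) (sinj : injective s) (f : {ffun 'I_K -> 'I_m}) :
  maxload (resF s f) <= maxload f.
Proof.
apply/bigmax_leqP => j _; apply: leq_trans (load_le_max f j).
rewrite /load -(card_imset _ sinj); apply: subset_leq_card.
apply/subsetP => b /imsetP [a]; rewrite !inE ffunE => Ha ->; done.
Qed.

Lemma load_lift n m (f : {ffun 'I_n.+1 -> 'I_m}) i j :
  load (resF (lift i) f) j + (f i == j) = load f j.
Proof.
rewrite /load !card_setE (bigD1_ord i (P := xpredT)) //= addnC; congr (_ + _).
by apply: eq_bigr => k _; rewrite ffunE.
Qed.

Definition Ssum m T n := \sum_(g : {ffun 'I_n -> 'I_m}) minn (maxload g) T.

Lemma step_pt n m T (f : {ffun 'I_n.+1 -> 'I_m}) : 0 < m ->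
  n * minn (maxload f) T <= \sum_(i < n.+1) minn (maxload (resF (lift i) f)) T.
Proof.
move=> Hm; have [j Hj] := maxload_att f Hm.
have Hpt i : minn (maxload f) T <= minn (maxload (resF (lift i) f)) T + (f i == j).
  have := load_le_max (resF (lift i) f) j; have := load_lift f i j; rewrite -Hj.
  case: (f i == j) => /=; lia.
case: (leqP (maxload f) T) => HT.
  have H1 : \sum_(i < n.+1) minn (maxload f) T <=
            \sum_(i < n.+1) (minn (maxload (resF (lift i) f)) T + (f i == j)).
    by apply: leq_sum => i _.
  rewrite big_split /= sum_nat_const card_ord in H1.
  have H2 : \sum_(i < n.+1) (f i == j : nat) = maxload f by rewrite Hj /load card_setE.
  rewrite H2 (minn_idPl HT) in H1; rewrite mulSn in H1; by rewrite -(leq_add2r (maxload f)) addnC.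
have H1 : \sum_(i < n.+1) minn (maxload f) T <=
            \sum_(i < n.+1) (minn (maxload (resF (lift i) f)) T).
  apply: leq_sum => i _; have := Hpt i.
  have := load_le_max (resF (lift i) f) j; have := load_lift f i j; rewrite -Hj.
  case: (f i == j) => /=; lia.
rewrite sum_nat_const card_ord in H1; lia.
Qed.

Lemma step n m T : 0 < m -> n * Ssum m T n.+1 <= n.+1 * m * Ssum m T n.
Proof.
move=> Hm; rewrite /Ssum big_distrr /=.
apply: (@leq_trans (\sum_(f : {ffun 'I_n.+1 -> 'I_m}) \sum_(i < n.+1) minn (maxload (resF (lift i) f)) T)).
  by apply: leq_sum => f _; apply: step_pt.
rewrite exchange_big /=.
rewrite (eq_bigr (fun i => m * \sum_(g : {ffun 'I_n -> 'I_m}) minn (maxload g) T)).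
  by rewrite sum_nat_const card_ord mulnA.
move=> i _; rewrite (sum_resF (lift_inj (h:=i)) (fun g => minn (maxload g) T)).
by rewrite !card_ord subSnn expn1.
Qed.

Lemma step_iter N d m T : 0 < m -> 0 < N ->
  N * Ssum m T (N + d) <= (N + d) * expn m d * Ssum m T N.
Proof.
move=> Hm HN; elim: d => [|d IH]; first by rewrite addn0 expn0 muln1.
have Hs := step (N + d) T Hm; rewrite -addnS in Hs.
have : (N + d) * (N * Ssum m T (N + d.+1)) <= (N + d) * ((N + d.+1) * expn m d.+1 * Ssum m T N).
  apply: leq_trans (_ : N * ((N + d.+1) * m * Ssum m T (N + d)) <= _).
    by rewrite mulnCA leq_mul2l Hs orbT.
  rewrite expnS.
  have := leq_mul2l (N + d.+1) (N * Ssum m T (N + d)) ((N + d) * expn m d * Ssum m T N).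
  rewrite IH orbT => Hk.
  have : m * ((N + d.+1) * (N * Ssum m T (N + d))) <= m * ((N + d.+1) * ((N + d) * expn m d * Ssum m T N)).
    by rewrite leq_mul2l Hk orbT.
  set a := Ssum m T (N + d); set b := Ssum m T N; set c := expn m d.
  move=> H; apply: leq_trans (_ : m * ((N + d.+1) * (N * a)) <= _); first by apply: eq_leq; lia.
  apply: leq_trans H _; apply: eq_leq; lia.
rewrite leq_mul2l; case/orP => // /eqP; lia.
Qed.


Lemma sum_pick (F : nat -> nat) y n : y < n ->
  \sum_(b < n) (if y == b then F b else 0) = F y.
Proof.
move=> Hy; rewrite (bigD1 (Ordinal Hy)) //= eqxx big1 ?addn0 // => b Hb.
case: eqP => // Heq; move: Hb; suff -> : b = Ordinal Hy by rewrite eqxx.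
by apply: val_inj; rewrite /= Heq.
Qed.

Lemma widen_inj n k (H : n <= k) : injective (widen_ord H).
Proof. by move=> a b /(congr1 val) /= /val_inj. Qed.

Section Coup.
Variables (N K m : nat) (H : N <= K).

Definition Xv (f : {ffun 'I_K -> 'I_m}) := maxload f.
Definition Yv (f : {ffun 'I_K -> 'I_m}) := maxload (resF (widen_ord H) f).
Definition cnt a b := #|[set f : {ffun 'I_K -> 'I_m} | (Xv f == a) && (Yv f == b)]|.

Lemma Xv_le f : Xv f <= K. Proof. exact: maxload_le. Qed.
Lemma Yv_leN f : Yv f <= N. Proof. exact: maxload_le. Qed.
Lemma Yv_le f : Yv f <= K. Proof. exact: leq_trans (Yv_leN f) H. Qed.
Lemma YX f : Yv f <= Xv f. Proof. apply: maxload_res; exact: widen_inj. Qed.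

Lemma dbl (E : nat -> nat -> bool) :
  \sum_(a < K.+1) \sum_(b < K.+1) (if E a b then cnt a b else 0) =
  #|[set f | E (Xv f) (Yv f)]|.
Proof.
rewrite card_setE.
transitivity (\sum_(a < K.+1) \sum_(b < K.+1) \sum_f
   (if Xv f == a then if Yv f == b then (E a b : nat) else 0 else 0)).
  apply: eq_bigr => a _; apply: eq_bigr => b _; rewrite /cnt card_setE.
  case: (E a b).
    by apply: eq_bigr => f _; case: (Xv f == a); case: (Yv f == b).
  by rewrite big1 // => f _; case: (Xv f == a); case: (Yv f == b).
rewrite (eq_bigr (fun a : 'I_K.+1 => \sum_f \sum_(b < K.+1)
   (if Xv f == a then if Yv f == b then (E a b : nat) else 0 else 0))); last first.
  by move=> a _; rewrite exchange_big.
rewrite exchange_big; apply: eq_bigr => f _.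
rewrite (eq_bigr (fun a : 'I_K.+1 => if Xv f == a then (E a (Yv f) : nat) else 0)).
  by rewrite (sum_pick (fun a => (E a (Yv f) : nat))) // ltnS Xv_le.
move=> a _; case: (Xv f == a).
  by rewrite (sum_pick (fun b => (E a b : nat))) // ltnS Yv_le.
by rewrite big1.
Qed.

Lemma sgl (w : nat -> nat) :
  \sum_(a < K.+1) w a * count_maxload K m a = \sum_f w (Xv f).
Proof.
rewrite (eq_bigr (fun a : 'I_K.+1 => \sum_f (if Xv f == a then w a else 0))).
  rewrite exchange_big; apply: eq_bigr => f _.
  by rewrite (sum_pick w) // ltnS Xv_le.
move=> a _; rewrite /count_maxload card_setE big_distrr /=.
by apply: eq_bigr => f _; rewrite /Xv; case: (maxload f == a); rewrite ?muln1 ?muln0.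
Qed.

Lemma marg1 a : a <= K -> \sum_(b < K.+1) cnt a b = count_maxload K m a.
Proof.
move=> Ha; have := dbl (fun a' _ => a' == a).
rewrite (eq_bigr (fun a' : 'I_K.+1 => if a == a' then \sum_(b < K.+1) cnt a' b else 0)).
  by rewrite (sum_pick (fun a' => \sum_(b < K.+1) cnt a' b)).
move=> a' _; have -> : (a == a') = (a' == a :> nat) by apply/eqP/eqP.
case: (_ == _) => //; by rewrite big1.
Qed.

Lemma marg2 b : b <= K -> \sum_(a < K.+1) cnt a b = expn m (K - N) * count_maxload N m b.
Proof.
move=> Hb; have := dbl (fun _ b' => b' == b).
rewrite exchange_big.
rewrite (eq_bigr (fun b' : 'I_K.+1 => if b == b' then \sum_(a < K.+1) cnt a b' else 0)).
  rewrite (sum_pick (fun b' => \sum_(a < K.+1) cnt a b')) // => ->.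
  rewrite card_setE /count_maxload card_setE.
  have := sum_resF (@widen_inj _ _ H) (fun g : {ffun 'I_N -> 'I_m} => (maxload g == b : nat)).
  by rewrite !card_ord.
move=> b' _; have -> : (b == b') = (b' == b :> nat) by apply/eqP/eqP.
case: (_ == _) => //; by rewrite big1.
Qed.

Lemma cnt0 a b : (K < a) \/ (K < b) \/ (a < b) -> cnt a b = 0.
Proof.
move=> Hab; rewrite /cnt; apply/eqP; rewrite cards_eq0; apply/eqP/setP => f.
rewrite !inE; apply/negbTE/negP => /andP [/eqP Ha /eqP Hb].
have := Xv_le f; have := Yv_le f; have := YX f; rewrite Ha Hb; lia.
Qed.

Lemma key T : 0 < m -> 0 < N ->
  N * \sum_f minn (Xv f) T <= K * \sum_f minn (Yv f) T.
Proof.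
move=> Hm HN.
have HY : \sum_f minn (Yv f) T = expn m (K - N) * Ssum m T N.
  have := sum_resF (@widen_inj _ _ H) (fun g : {ffun 'I_N -> 'I_m} => minn (maxload g) T).
  by rewrite !card_ord.
rewrite HY; have := step_iter (K - N) T Hm HN; rewrite subnKC //.
by rewrite mulnA.
Qed.

Lemma card_compl (P : pred {ffun 'I_K -> 'I_m}) :
  #|[set f | P f]| + #|[set f | ~~ P f]| = expn m K.
Proof.
have := cardsC [set f | P f]; rewrite card_ffun !card_ord => <-; congr (_ + _).
by apply: eq_card => f; rewrite !inE.
Qed.

Lemma markov (P : pred {ffun 'I_K -> 'I_m}) (g : {ffun 'I_K -> 'I_m} -> nat) q :
  (forall f, P f -> q <= g f) -> #|[set f | P f]| * q <= \sum_f g f.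
Proof.
move=> Hq; rewrite -sum_nat_cond_const [X in _ <= X](bigID P) /=.
apply: leq_trans (leq_addr _ _); exact: leq_sum.
Qed.

End Coup.

End Helpers.


Lemma sumR_nat (G : nat -> nat) D K :
  sum_f_R0 (fun i => INR (G i) / D) K = INR (\sum_(i < K.+1) G i) / D.
Proof.
elim: K => [|K IH]; first by rewrite /= big_ord_recr big_ord0 /=.
rewrite /= IH [in RHS]big_ord_recr /= plus_INR /Rdiv Rmult_plus_distr_r //.
Qed.

Lemma eqb_eqn a b : Nat.eqb a b = (a == b).
Proof.
apply/idP/eqP => [/PeanoNat.Nat.eqb_eq //|->]; exact: PeanoNat.Nat.eqb_refl.
Qed.

Lemma nfloor_spec x : 0 <= x -> INR (nfloor x) <= x < INR (nfloor x) + 1.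
Proof.
move=> Hx; rewrite /nfloor; have [h1 h2] := base_Int_part x.
have Hz : (0 <= Int_part x)%Z.
  have : (-1 < Int_part x)%Z by apply: lt_IZR; rewrite /=; lra.
  lia.
rewrite INR_IZR_INZ Z2Nat.id //; lra.
Qed.

Lemma nfloor_lt x a : 0 <= x -> ((nfloor x < a)%nat <-> x < INR a).
Proof.
move=> Hx; have [h1 h2] := nfloor_spec x Hx; split.
  move=> Ha; have : INR (nfloor x).+1 <= INR a by apply: le_INR; apply/leP.
  rewrite S_INR; lra.
move=> Ha; apply/ltP; apply: INR_lt; lra.
Qed.

Lemma cv_squeeze (u b : nat -> R) :
  (forall n, 0 <= 1 - u n <= b n) -> Un_cv b 0 -> Un_cv u 1.
Proof.
move=> Hb Hc eps He; have [n0 Hn0] := Hc eps He; exists n0 => n Hn.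
have := Hn0 n Hn; have := Hb n; rewrite /R_dist => [[h1 h2]].
rewrite Rminus_0_r Rabs_right; last lra.
move=> h3; rewrite Rabs_left1; lra.
Qed.

Definition pJ N K m (H : (N <= K)%nat) (a b : nat) : R :=
  INR (cnt m H a b) / INR (expn m K).
Arguments pJ {N K} m H a b.

Section PerN.
Variables (N K m : nat) (H : (N <= K)%nat).
Hypothesis (Hm : (0 < m)%nat) (HN : (0 < N)%nat).
Let D := INR (expn m K).

Lemma D_pos : 0 < D.
Proof. apply: lt_0_INR; apply/ltP; by rewrite expn_gt0 Hm. Qed.

Lemma probJ_eq (E : nat -> nat -> bool) :
  probJ K (pJ m H) E = INR #|[set f : {ffun 'I_K -> 'I_m} | E (Xv f) (Yv H f)]| / D.
Proof.
rewrite /probJ -(dbl m H E).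
rewrite (sum_eq _ (fun a => INR (\sum_(b < K.+1) (if E a b then cnt m H a b else 0)) / D)).
  by rewrite sumR_nat.
move=> a _; rewrite -(sumR_nat (fun b => if E a b then cnt m H a b else 0%nat)); apply: sum_eq => b _.
rewrite /pJ; case: (E a b) => //; rewrite /Rdiv Rmult_0_l //.
Qed.

Lemma compl_eq (E : nat -> nat -> bool) :
  1 - probJ K (pJ m H) E = INR #|[set f : {ffun 'I_K -> 'I_m} | ~~ E (Xv f) (Yv H f)]| / D.
Proof.
rewrite probJ_eq; have HD := D_pos.
have Hc := card_compl (m:=m) (fun f => E (Xv f) (Yv H f)).
have : INR #|[set f : {ffun 'I_K -> 'I_m} | E (Xv f) (Yv H f)]| + INR #|[set f : {ffun 'I_K -> 'I_m} | ~~ E (Xv f) (Yv H f)]| = D.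
  by rewrite -plus_INR; exact: (f_equal INR Hc).
move=> Heq; field_simplify_eq; [lra | lra].
Qed.

Lemma mean_eq : mean_M K m = INR (\sum_f Xv (K:=K) (m:=m) f) / D.
Proof.
rewrite /mean_M (sum_eq _ (fun a => INR (a * count_maxload K m a) / D)).
  by rewrite sumR_nat (sgl K m (fun a => a)).
move=> a _; rewrite /law_M mult_INR /Rdiv Rmult_assoc //.
Qed.

Lemma tail_eq x : 0 <= x ->
  tail_M K m x = INR #|[set f : {ffun 'I_K -> 'I_m} | (nfloor x < Xv (K:=K) (m:=m) f)%nat]| / D.
Proof.
move=> Hx; rewrite /tail_M (sum_eq _ (fun a => INR ((nfloor x < a)%nat * count_maxload K m a) / D)).
  by rewrite sumR_nat (sgl K m (fun a => (nfloor x < a)%nat)) card_setE.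
move=> a _; rewrite /law_M; case: Rlt_dec => Hl.
  have -> : (nfloor x < a)%nat by apply/nfloor_lt.
  by rewrite mul1n.
have -> : (nfloor x < a)%nat = false.
  by apply/negbTE/negP => /(nfloor_lt x a Hx).
rewrite mul0n /= /Rdiv Rmult_0_l //.
Qed.

Lemma coupling_ok : is_coupling K (pJ m H) (law_M K m) (law_M N m).
Proof.
have HD := D_pos.
split; [|split; [|split]].
- move=> a b; rewrite /pJ; apply: Rmult_le_pos; [apply: pos_INR | apply: Rlt_le; apply: Rinv_0_lt_compat; exact: HD].
- move=> a b Hab; rewrite /pJ (cnt0 m H); first by rewrite /= /Rdiv Rmult_0_l.
  by case: Hab; [left | right; left].
- move=> a Ha; rewrite /pJ sumR_nat (marg1 m H) //.
- move=> b Hb; rewrite /pJ.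
  rewrite (sum_eq _ (fun a => INR (cnt m H a b) / D)) // sumR_nat (marg2 m H) //.
  rewrite /law_M mult_INR /D.
  have -> : expn m K = (expn m (K - N) * expn m N)%nat by rewrite -expnD subnK.
  rewrite mult_INR.
  have h1 : 0 < INR (expn m (K - N)) by apply: lt_0_INR; apply/ltP; rewrite expn_gt0 Hm.
  have h2 : 0 < INR (expn m N) by apply: lt_0_INR; apply/ltP; rewrite expn_gt0 Hm.
  field; lra.
Qed.


Variables (eps delta : R).
Hypotheses (He : 0 < eps) (Hd : 0 < delta) (HK : INR K <= INR N * (1 + eps)).

Lemma diff_bound T :
  INR (\sum_f minn (Xv (K:=K) (m:=m) f) T) - INR (\sum_f minn (Yv (m:=m) H f) T)
  <= eps * INR (\sum_f minn (Xv (K:=K) (m:=m) f) T).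
Proof.
set A := (\sum_f _)%nat; set B := (\sum_f _)%nat.
have h1 : INR N * INR A <= INR K * INR B.
  rewrite -!mult_INR; apply: le_INR; apply/leP; exact: key.
have h2 : INR B <= INR A.
  apply: le_INR; apply/leP; apply: leq_sum => f _.
  by rewrite leq_min geq_minr andbT; apply: leq_trans (geq_minl _ _) (YX H f).
have hN : 0 < INR N by apply: lt_0_INR; apply/ltP.
have hA : 0 <= INR A by apply: pos_INR.
have hNK : INR N <= INR K by apply: le_INR; apply/leP.
have h4 : INR K * INR A <= INR N * (1 + eps) * INR A by apply: Rmult_le_compat_r.
have h5 : eps * INR A * INR N <= eps * INR A * INR K.
  apply: Rmult_le_compat_l => //; apply: Rmult_le_pos; lra.
have h3 : INR K * (INR A - INR B) <= INR K * (eps * INR A) by lra.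
apply: (Rmult_le_reg_l (INR K)); lra.
Qed.

Lemma partA :
  0 <= 1 - probJ K (pJ m H) (fun a b => Rle_b (INR a - delta * mean_M K m) (INR b)) <= eps / delta.
Proof.
have HD := D_pos.
rewrite compl_eq.
set S := [set f : {ffun 'I_K -> 'I_m} | _].
split.
  apply: Rmult_le_pos; [apply: pos_INR | apply: Rlt_le; apply: Rinv_0_lt_compat; exact: HD].
set X := (\sum_f Xv (K:=K) (m:=m) f)%nat.
set Y := (\sum_f Yv (m:=m) H f)%nat.
set s := delta * mean_M K m.
have Hs0 : 0 <= s.
  rewrite /s mean_eq; apply: Rmult_le_pos; first lra.
  apply: Rmult_le_pos; [apply: pos_INR | apply: Rlt_le; apply: Rinv_0_lt_compat; exact: HD].
have [hq1 hq2] := nfloor_spec s Hs0.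
have Hm1 : (#|S| * (nfloor s).+1 <= X - Y)%nat.
  rewrite /X /Y -sumnB; last by move=> f _; exact: YX.
  apply: markov => f; rewrite /Rle_b; case: Rle_dec => // Hn _.
  apply/nfloor_lt => //; rewrite minus_INR; last by apply/leP; exact: YX.
  rewrite /s; lra.
have HYX : (Y <= X)%nat by apply: leq_sum => f _; exact: YX.
have Hm2 : INR #|S| * INR (nfloor s).+1 <= INR X - INR Y.
  rewrite -mult_INR -minus_INR; last by apply/leP.
  by apply: le_INR; apply/leP.
have Hdb := diff_bound K.
have eX : (\sum_f minn (Xv (K:=K) (m:=m) f) K = X)%nat.
  by apply: eq_bigr => f _; apply/minn_idPl; exact: Xv_le.
have eY : (\sum_f minn (Yv (m:=m) H f) K = Y)%nat.
  by apply: eq_bigr => f _; apply/minn_idPl; exact: Yv_le.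
rewrite eX eY in Hdb.
rewrite S_INR in Hm2 hq2.
have Hms : s = delta * INR X / D by rewrite /s mean_eq /Rdiv Rmult_assoc.
set a := INR #|S|; set Q := INR (nfloor s) + 1.
have hQ : 0 < Q by rewrite /Q; lra.
have ha : 0 <= a by apply: pos_INR.
have hX : 0 <= INR X by apply: pos_INR.
have h1 : a * Q <= eps * INR X by rewrite /a /Q; lra.
have h2 : delta * INR X < Q * D.
  have : delta * INR X / D * D < Q * D by apply: Rmult_lt_compat_r => //; rewrite -Hms /Q; lra.
  by rewrite /Rdiv Rmult_assoc Rinv_l ?Rmult_1_r //; lra.
have h3 : a * Q * delta <= eps * INR X * delta by apply: Rmult_le_compat_r; lra.
have h4 : eps * (delta * INR X) <= eps * (Q * D) by apply: Rmult_le_compat_l; lra.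
have h5 : Q * (a * delta) <= Q * (eps * D) by lra.
have h6 : a * delta <= eps * D by apply: (Rmult_le_reg_l Q).
apply: (Rmult_le_reg_r (D * delta)); first by apply: Rmult_lt_0_compat.
rewrite /Rdiv; field_simplify; lra.
Qed.

Lemma partB :
  0 <= 1 - probJ K (pJ m H) (fun a b => Nat.eqb a b) <= tail_M K m (/ delta) + eps / delta.
Proof.
have HD := D_pos.
rewrite compl_eq.
set S := [set f : {ffun 'I_K -> 'I_m} | _].
split.
  apply: Rmult_le_pos; [apply: pos_INR | apply: Rlt_le; apply: Rinv_0_lt_compat; exact: HD].
have Hi : 0 <= / delta by apply: Rlt_le; apply: Rinv_0_lt_compat.
rewrite tail_eq //.
set T := nfloor (/ delta).
set A := (\sum_f minn (Xv (K:=K) (m:=m) f) T)%nat.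
set B := (\sum_f minn (Yv (m:=m) H f) T)%nat.
set Ct := #|[set f : {ffun 'I_K -> 'I_m} | (T < Xv f)%nat]|.
have Hdb : INR A - INR B <= eps * INR A := diff_bound T.
have HBA : (B <= A)%nat.
  apply: leq_sum => f _.
  by rewrite leq_min geq_minr andbT; apply: leq_trans (geq_minl _ _) (YX H f).
have Hn : (#|S| <= Ct + (A - B))%nat.
  rewrite /Ct /A /B !card_setE -sumnB; last first.
    by move=> f _; rewrite leq_min geq_minr andbT; apply: leq_trans (geq_minl _ _) (YX H f).
  rewrite -big_split /=; apply: leq_sum => f _.
  rewrite eqb_eqn; have := YX H f.
  set x := Xv f; set y := Yv H f.
  case: (ltnP T x) => hT /=; case: eqP => hxy /=; try lia.
have HAT : (A <= expn m K * T)%nat.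
  apply: leq_trans (_ : \sum_(f : {ffun 'I_K -> 'I_m}) T <= _)%nat.
    by apply: leq_sum => f _; apply: geq_minr.
  by rewrite sum_nat_const card_ffun !card_ord.
have hT := nfloor_spec (/ delta) Hi; rewrite -/T in hT.
have Hn' : INR #|S| <= INR Ct + (INR A - INR B).
  rewrite -minus_INR; last by apply/leP.
  rewrite -plus_INR; apply: le_INR; apply/leP; exact: Hn.
have HAT' : INR A <= D * INR T.
  rewrite /D -mult_INR; apply: le_INR; apply/leP; exact: HAT.
have hA : 0 <= INR A by apply: pos_INR.
have h1 : eps * INR A <= eps * (D * / delta).
  apply: Rmult_le_compat_l; first lra.
  apply: Rle_trans HAT' _; apply: Rmult_le_compat_l; lra.
have h2 : INR #|S| <= INR Ct + eps * (D * / delta)  by lra.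
apply: (Rmult_le_reg_r D) => //.
rewrite Rmult_plus_distr_r /Rdiv !Rmult_assoc Rinv_l ?Rmult_1_r; last lra.
have -> : eps * (/ delta * D) = eps * (D * / delta) by ring.
exact: h2.
Qed.

End PerN.


Theorem mainTheorem18
  (N m : nat -> nat) (delta eps : nat -> R)
  (HNpos : forall n, (0 < N n)%nat) (Hmpos : forall n, (0 < m n)%nat)
  (HNinf : tends_to_infty N) (Hminf : tends_to_infty m)
  (Hdpos : forall n, 0 < delta n) (Hepos : forall n, 0 < eps n)
  (Hd0 : Un_cv delta 0) (He0 : Un_cv eps 0)
  (Hed : Un_cv (fun n => eps n / delta n) 0) :
  let N' := fun n => nfloor (INR (N n) * (1 + eps n)) in
  exists p : nat -> nat -> nat -> R,
    (forall n, is_coupling (N' n) (p n) (law_M (N' n) (m n)) (law_M (N n) (m n))) /\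
    (forall n a b, (a < b)%nat -> p n a b = 0) /\
    Un_cv (fun n => probJ (N' n) (p n)
             (fun a b => Rle_b (INR a - delta n * mean_M (N' n) (m n)) (INR b))) 1 /\
    (Un_cv (fun n => tail_M (N' n) (m n) (/ delta n)) 0 ->
     Un_cv (fun n => probJ (N' n) (p n) (fun a b => Nat.eqb a b)) 1).
Proof.
move=> N'.
have Hx n : 0 <= INR (N n) * (1 + eps n).
  apply: Rmult_le_pos; [apply: pos_INR | have := Hepos n; lra].
have HK n : INR (N' n) <= INR (N n) * (1 + eps n).
  by have [h1 h2] := nfloor_spec _ (Hx n).
have HNN n : (N n <= N' n)%nat.
  have [h1 h2] := nfloor_spec _ (Hx n).
  have h3 : INR (N n) <= INR (N n) * (1 + eps n).
    have := Hepos n; have := pos_INR (N n); nra.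
  have : INR (N n) < INR (N' n) + 1 by rewrite /N'; lra.
  rewrite -S_INR => /INR_lt /ltP; by rewrite ltnS.
exists (fun n => pJ (m n) (HNN n)).
split; first by move=> n; exact: coupling_ok.
split.
  move=> n a b Hab; rewrite /pJ (cnt0 (m n) (HNN n)); last by right; right.
  by rewrite /= /Rdiv Rmult_0_l.
split.
  apply: (cv_squeeze _ (fun n => eps n / delta n)) => // n.
  exact: partA.
move=> Ht.
apply: (cv_squeeze _ (fun n => tail_M (N' n) (m n) (/ delta n) + eps n / delta n)).
  move=> n; exact: partB.
have := CV_plus _ _ _ _ Ht Hed; by rewrite Rplus_0_l.
Qed.
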